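(* Let $M$ be a quasi-permutation matrix. The permutations that are minimal (for the pattern order) among permutations containing $M$ as a submatrix are exactly the permutations whose matrices can be obtained from $M$ by inserting rows, each containing exactly one entry $1$, this entry lying in a column of $M$ consisting only of $0$'s, and inserting columns, each containing exactly one entry $1$, this entry lying in a row of $M$ consisting only of $0$'s.
   Context: A quasi-permutation matrix is a binary matrix with at most one entry $1$ in each row and in each column. A permutation $\sigma$ of $\{1,\dots,n\}$ is identified with its permutation matrix $M_\sigma$ ($M_\sigma(i,j)=1$ iff $i=\sigma(j)$, rows numbered bottom to top). A matrix $M$ is a submatrix of $N$ if $M$ is obtained from $N$ by deleting some rows and/or columns; the pattern order on permutations is the submatrix order restricted to permutation matrices. *)

(* Defs.v *)
From mathcomp Require Import all_boot all_order all_algebra all_fingroup.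
Set Implicit Arguments. Unset Strict Implicit. Unset Printing Implicit Defensive.

Definition incr {m p : nat} (f : 'I_m -> 'I_p) : Prop :=
  forall i j : 'I_m, i < j -> f i < f j.

Definition quasi_perm {m n : nat} (M : 'M[bool]_(m, n)) : Prop :=
  (forall i j j', M i j -> M i j' -> j = j') /\
  (forall i i' j, M i j -> M i' j -> i = i').

Definition is_submatrix {m n p q : nat}
    (M : 'M[bool]_(m, n)) (N : 'M[bool]_(p, q)) : Prop :=
  exists (f : 'I_m -> 'I_p) (g : 'I_n -> 'I_q),
    incr f /\ incr g /\ forall i j, N (f i) (g j) = M i j.

Definition permmx {n : nat} (s : 'S_n) : 'M[bool]_n :=
  \matrix_(i, j) (i == s j).

Definition pattern_le {k n : nat} (s : 'S_k) (t : 'S_n) : Prop :=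
  is_submatrix (permmx s) (permmx t).

Definition minimal_containing {m n p : nat} (M : 'M[bool]_(m, n)) (t : 'S_p)
    : Prop :=
  is_submatrix M (permmx t) /\
  forall (k : nat) (s : 'S_k),
    is_submatrix M (permmx s) -> pattern_le s t -> pattern_le t s.

Definition obtained_by_insertion {m n p q : nat}
    (M : 'M[bool]_(m, n)) (N : 'M[bool]_(p, q)) : Prop :=
  exists (f : 'I_m -> 'I_p) (g : 'I_n -> 'I_q),
    [/\ incr f, incr g,
     (forall i j, N (f i) (g j) = M i j),
     (forall r : 'I_p, ~ (exists i, f i = r) ->
        exists j : 'I_n, (forall i, M i j = false) /\
                         (forall c : 'I_q, N r c = (c == g j))) &
     (forall c : 'I_q, ~ (exists j, g j = c) ->
        exists i : 'I_m, (forall j, M i j = false) /\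
                         (forall r : 'I_p, N r c = (r == f i)))].

(* Main.v *)
Require Import Defs.
From mathcomp Require Import all_boot all_order all_algebra all_fingroup.
From mathcomp Require Import zify.
Set Implicit Arguments. Unset Strict Implicit. Unset Printing Implicit Defensive.

Lemma ltn_lift2 n (h : 'I_n) (a b : 'I_n.-1) : (lift h a < lift h b) = (a < b).
Proof. by rewrite /= !ltnNge leq_bump2. Qed.

Lemma incr_inj m p (f : 'I_m -> 'I_p) : incr f -> injective f.
Proof.
move=> Hf i j E; apply/eqP; case: (ltngtP i j) => // H.
- by have := Hf _ _ H; rewrite E ltnn.
- by have := Hf _ _ H; rewrite E ltnn.
- by apply/eqP; apply: val_inj.
Qed.

Lemma incr_le m p (f : 'I_m -> 'I_p) : incr f -> m <= p.
Proof. by move=> /incr_inj/leq_card; rewrite !card_ord. Qed.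

Lemma incr_lb m p (f : 'I_m -> 'I_p) : incr f -> forall i : 'I_m, i <= f i.
Proof.
move=> Hf; suff H : forall k (i : 'I_m), nat_of_ord i = k -> k <= f i by move=> i; exact: H.
elim=> [//|k IH] i Hi.
have Hk : k < m by apply: ltn_trans (ltn_ord i); rewrite Hi.
have := Hf (Ordinal Hk) i; rewrite Hi ltnSn => /(_ isT).
by have := IH (Ordinal Hk) erefl; apply: leq_ltn_trans.
Qed.

Lemma incr_ub m p (f : 'I_m -> 'I_p) : incr f -> forall i : 'I_m, f i + (m - i) <= p.
Proof.
move=> Hf; suff H : forall k (i : 'I_m), m - nat_of_ord i = k.+1 -> f i + k.+1 <= p.
  by move=> i; have Hi := ltn_ord i; rewrite -(subnSK Hi); apply: H; rewrite subnSK.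
elim=> [|k IH] i Hi; first by rewrite addn1 ltn_ord.
have Hk : i.+1 < m by move: Hi; lia.
have H1 := IH (Ordinal Hk); rewrite /= subnS Hi /= in H1.
have H2 := Hf i (Ordinal Hk) (ltnSn _); rewrite /= in H2.
have := H1 erefl; move: H2; lia.
Qed.

Lemma incr_id p (f : 'I_p -> 'I_p) : incr f -> forall i, f i = i.
Proof.
move=> Hf i; apply: val_inj => /=; have := incr_lb Hf i; have := incr_ub Hf i.
have := ltn_ord i; clear; lia.
Qed.

Lemma lift_ex n (h x : 'I_n) : h != x -> exists y, lift h y = x.
Proof. by move=> /unlift_some [y -> _]; exists y. Qed.

Lemma delete_point m n (M : 'M[bool]_(m, n)) p (t : 'S_p) (f : 'I_m -> 'I_p)
  (g : 'I_n -> 'I_p) (c : 'I_p) :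
  incr f -> incr g -> (forall i j, permmx t (f i) (g j) = M i j) ->
  (forall i, f i != t c) -> (forall j, g j != c) ->
  ~ minimal_containing M t.
Proof.
move=> If Ig HM Hf Hg [_ Hmin].
have Ht : forall j : 'I_p.-1, exists y, lift (t c) y = t (lift c j).
  by move=> j; apply: lift_ex; rewrite (inj_eq perm_inj) neq_lift.
have [sg Hsg] := fin_all_exists Ht.
have sinj : injective sg.
  by move=> a b E; apply: (@lift_inj _ c); apply: (@perm_inj _ t); rewrite -!Hsg E.
pose s := perm sinj.
have Hf' : forall i, exists y, lift (t c) y = f i by move=> i; apply: lift_ex; rewrite eq_sym.
have [f' Hf'e] := fin_all_exists Hf'.
have Hg' : forall j, exists y, lift c y = g j by move=> j; apply: lift_ex; rewrite eq_sym.
have [g' Hg'e] := fin_all_exists Hg'.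
have Hst : pattern_le s t.
  exists (lift (t c)), (lift c); split; [|split].
  - by move=> a b; rewrite ltn_lift2.
  - by move=> a b; rewrite ltn_lift2.
  - move=> i j; rewrite !mxE permE -Hsg.
    by rewrite (inj_eq (@lift_inj _ _)).
have HMs : is_submatrix M (permmx s).
  exists f', g'; split; [|split].
  - by move=> a b ab; rewrite -(ltn_lift2 (t c)) !Hf'e; apply: If.
  - by move=> a b ab; rewrite -(ltn_lift2 c) !Hg'e; apply: Ig.
  - move=> i j; rewrite -HM !mxE permE -(inj_eq (@lift_inj _ (t c))) Hsg Hg'e.
    by rewrite Hf'e.
have [a [b [Ia _]]] := Hmin _ s HMs Hst.
have := incr_le Ia; have := ltn_ord c; clear; lia.
Qed.

Theorem proposition9 (m n : nat) (M : 'M[bool]_(m, n)) :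
  quasi_perm M ->
  forall (p : nat) (t : 'S_p),
    minimal_containing M t <-> obtained_by_insertion M (permmx t).
Proof.
move=> HqM p t; split.
- move=> Hmin; have [f [g [If [Ig HM]]]] := Hmin.1.
  have HMe : forall i j, M i j = (f i == t (g j)) by move=> i j; rewrite -HM mxE.
  exists f, g; split => //.
  + move=> r Hr.
    case: (boolP [exists j, g j == (t^-1)%g r]) => [/existsP [j /eqP Ej] | Hn].
    * exists j; split.
      - move=> i; rewrite HMe Ej permKV; apply/negP => /eqP E; apply: Hr; by exists i.
      - move=> c; rewrite mxE Ej; apply/idP/idP => /eqP E.
        + by apply/eqP; apply: (@perm_inj _ t); rewrite permKV E.
        + by rewrite E permKV.
    * exfalso; apply: (delete_point (c := (t^-1)%g r) If Ig HM _ _ Hmin).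
      - move=> i; rewrite permKV; apply/eqP => E; apply: Hr; by exists i.
      - move=> j; apply/negP => E; move/negP: Hn; apply; apply/existsP; by exists j.
  + move=> c Hc.
    case: (boolP [exists i, f i == t c]) => [/existsP [i /eqP Ei] | Hn].
    * exists i; split.
      - move=> j; rewrite HMe Ei (inj_eq perm_inj); apply/negP => /eqP E;
        apply: Hc; by exists j.
      - by move=> r; rewrite mxE Ei.
    * exfalso; apply: (delete_point (c := c) If Ig HM _ _ Hmin).
      - move=> i; apply/negP => E; move/negP: Hn; apply; apply/existsP; by exists i.
      - move=> j; apply/eqP => E; apply: Hc; by exists j.
- move=> [f [g [If Ig HM Hr Hc]]]; split; first by exists f, g.
  move=> k s [F [G [IF [IG HF]]]] [a [b [Ia [Ib Hab]]]].
  have HFe : forall i j, M i j = (F i == s (G j)) by move=> i j; rewrite -HF mxE.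
  have kp : k <= p by exact: incr_le Ia.
  have Ex : forall r : 'I_p, exists x : 'I_k,
      (exists i, f i = r /\ x = F i) \/
      (exists j, (forall i, M i j = false) /\ t (g j) = r /\ x = s (G j)).
    move=> r; case: (boolP [exists i, f i == r]) => [/existsP [i /eqP Ei] | Hn].
      by exists (F i); left; exists i.
    have [j [Hj Hrj]] : exists j : 'I_n, (forall i, M i j = false) /\
                         (forall c : 'I_p, permmx t r c = (c == g j)).
      apply: Hr => -[i Ei]; move/negP: Hn; apply; apply/existsP; exists i; exact/eqP.
    exists (s (G j)); right; exists j; split => //; split => //.
    by have := Hrj (g j); rewrite mxE eqxx => /eqP.
  have [phi Hphi] := fin_all_exists Ex.
  have Fi := incr_inj IF; have Gi := incr_inj IG; have fi := incr_inj If;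
    have gi := incr_inj Ig.
  have phinj : injective phi.
    move=> r1 r2 E.
    case: (Hphi r1) => [[i1 [E1 X1]] | [j1 [Z1 [E1 X1]]]];
    case: (Hphi r2) => [[i2 [E2 X2]] | [j2 [Z2 [E2 X2]]]].
    - by rewrite -E1 -E2; congr f; apply: Fi; rewrite -X1 -X2.
    - by have := Z2 i1; rewrite HFe -X1 E X2 eqxx.
    - by have := Z1 i2; rewrite HFe -X2 -E X1 eqxx.
    - rewrite -E1 -E2; congr (t (g _)); apply: Gi; apply: (@perm_inj _ s).
      by rewrite -X1 -X2.
  have pk : p <= k by move/leq_card: phinj; rewrite !card_ord.
  have Ekp : k = p by apply/eqP; rewrite eqn_leq kp pk.
  subst k.
  have Ha := incr_id Ia; have Hb := incr_id Ib.
  exists id, id; split; [by []|split; [by []|]].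
  by move=> i j; rewrite -Hab Ha Hb.
Qed.
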